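(* $\mathrm{LIM}_{\operatorname{non}(\mathcal N)}(\mathcal L)\supsetneq\mathcal L$; that is, there is a $\operatorname{non}(\mathcal N)$-sequence of Lebesgue measurable functions $\mathbb R\to\mathbb R$ converging pointwise to a function that is not Lebesgue measurable.
   Context: $\mathcal L$ is the family of Lebesgue measurable functions $\mathbb R\to\mathbb R$. For an infinite cardinal $\kappa$, a $\kappa$-sequence $(f_\alpha)_{\alpha<\kappa}$ of real functions converges pointwise to $f$ if for every $x$ and every $\varepsilon>0$ there is $\alpha_0<\kappa$ with $|f_\alpha(x)-f(x)|<\varepsilon$ for all $\alpha_0<\alpha<\kappa$; $\mathrm{LIM}_\kappa(\mathcal F)$ is the set of all pointwise limits of $\kappa$-sequences of elements of $\mathcal F$. $\operatorname{non}(\mathcal N)$ is the least cardinality of a non-null subset of $[0,1]$. *)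

(* Defs.v *)
From HB Require Import structures.
From mathcomp Require Import all_boot all_order all_algebra.
From mathcomp Require Import all_classical all_reals all_analysis.
Set Implicit Arguments.
Unset Strict Implicit.
Unset Printing Implicit Defensive.
Import Order.TTheory GRing.Theory Num.Theory.
Import numFieldNormedType.Exports.
Local Open Scope classical_set_scope.
Local Open Scope ring_scope.

(* The real line with the Lebesgue (completed, = Caratheodory) sigma-algebra;
   its measure is [completed_lebesgue_measure]. *)
Definition LebesgueR (R : realType) :=
  caratheodory_type (@wlength R idfun)^*%mu.

Definition lebesgue_measurable_fun (R : realType) (f : R -> R) : Prop :=
  measurable_fun [set: LebesgueR R] (f : LebesgueR R -> R).

Definition non_null01 (R : realType) (A : set R) : Prop :=
  A `<=` `[0%R, 1%R] /\ ~ (@lebesgue_measure R).-negligible A.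

Definition strict_wellorder (I : Type) (r : I -> I -> Prop) : Prop :=
  (forall x, ~ r x x) /\
  (forall x y z, r x y -> r y z -> r x z) /\
  (forall x y, x = y \/ r x y \/ r y x) /\
  well_founded r.

(* (I, r) has order type the initial ordinal non(N): r is a well-order,
   |I| = non(N) (I is equinumerous with some non-null subset of [0,1] and
   injects into every non-null subset of [0,1]), and every proper initial
   segment of I has cardinality < |I|. *)
Definition order_type_nonN (R : realType) (I : Type) (r : I -> I -> Prop)
  : Prop :=
  strict_wellorder r /\
  (exists A : set R, non_null01 A /\ ([set: I] #= A)%card) /\
  (forall B : set R, non_null01 B -> ([set: I] #<= B)%card) /\
  (forall i : I, ~ ([set: I] #<= [set j | r j i])%card).

Definition wo_pointwise_cvg (R : realType) (I : Type) (r : I -> I -> Prop)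
  (f : I -> R -> R) (g : R -> R) : Prop :=
  forall (x : R) (e : R), 0 < e ->
    exists i0 : I, forall i : I, r i0 i -> `|f i x - g x| < e.

(* LIM_kappa(L), kappa being the order type of (I, r) *)
Definition LIM_L (R : realType) (I : Type) (r : I -> I -> Prop)
  (g : R -> R) : Prop :=
  exists f : I -> R -> R,
    (forall i, lebesgue_measurable_fun (f i)) /\ wo_pointwise_cvg r f g.

(* Main.v *)
From HB Require Import structures.
Require Import Defs.
From mathcomp Require Import all_boot all_order all_algebra all_classical all_reals all_analysis.
From mathcomp Require wochoice.
From mathcomp Require Import measurable_realfun.
From mathcomp Require Import ring lra.
Set Implicit Arguments.
Unset Strict Implicit.
Unset Printing Implicit Defensive.
Import Order.TTheory GRing.Theory Num.Theory.
Import numFieldNormedType.Exports.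
Local Open Scope classical_set_scope.
Local Open Scope ring_scope.
Local Open Scope ereal_scope.

Definition om (R : realType) : set R -> \bar R := ((@wlength R idfun)^*)%mu.

Definition sh (R : realType) (c : R) (A : set R) : set R := [set y | A (y - c)%R].

Lemma shK (R : realType) (c : R) (A : set R) : sh (- c) (sh c A) = A.
Proof. by apply/funext => y; rewrite /sh /= opprK addrK. Qed.

Lemma sh_itv (R : realType) (c a b : R) :
  sh c `]a, b]%classic = `](a + c)%R, (b + c)%R]%classic.
Proof.
apply/funext => y; apply/propext; rewrite /sh /= !in_itv /=.
by rewrite ltrBrDr lerBlDr.
Qed.

Lemma sh_ocitv (R : realType) (c : R) (F : set (ocitv_type R)) :
  measurable F -> measurable (sh c F : set (ocitv_type R)) /\
  wlength idfun (sh c F : set (ocitv_type R)) = wlength idfun F.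
Proof.
move=> /ocitvP[->|[x x12 ->]].
  have -> : sh c set0 = set0 by apply/funext => y.
  by split => //; exact: measurable0.
rewrite sh_itv; split; first exact: is_ocitv.
rewrite !wlength_itv_bnd ?lerD2r ?ltW //=.
by rewrite opprD addrACA subrr addr0.
Qed.

Lemma om_sh_le (R : realType) (c : R) (A : set R) : om (sh c A) <= om A.
Proof.
rewrite /om /mu_ext; apply: ereal_inf_le_tmp => _ [F [mF AF] <-].
exists (fun k => sh c (F k)).
  split; first by move=> k; exact: (sh_ocitv c (mF k)).1.
  by move=> y /AF [k _ Fk]; exists k.
by apply: eq_eseriesr => k _; exact: (sh_ocitv c (mF k)).2.
Qed.

Lemma om_sh (R : realType) (c : R) (A : set R) : om (sh c A) = om A.
Proof.
apply/eqP; rewrite eq_le om_sh_le /=.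
by rewrite -{1}(shK c A) om_sh_le.
Qed.

Lemma shK' (R : realType) (c : R) (A : set R) : sh c (sh (- c) A) = A.
Proof. by rewrite -{1}(opprK c) shK. Qed.

Lemma measE (R : realType) (A : set R) :
  measurable (A : set (LebesgueR R)) <-> caratheodory_measurable (@om R) A.
Proof. by []. Qed.

Lemma cara_sh (R : realType) (c : R) (A : set R) :
  measurable (A : set (LebesgueR R)) -> measurable (sh c A : set (LebesgueR R)).
Proof.
move=> /measE mA; apply/measE => X.
have E1 : X `&` sh c A = sh c (sh (- c) X `&` A).
  by rewrite -[in LHS](shK' c X).
have E2 : X `&` ~` sh c A = sh c (sh (- c) X `&` ~` A).
  by rewrite -[in LHS](shK' c X).
by rewrite E1 E2 !om_sh -(mA (sh (- c) X)) om_sh.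
Qed.

Local Close Scope ereal_scope.

Definition Qr (R : realType) (x : R) := exists q : rat, x = ratr q.

Lemma Qr_sub (R : realType) (a b : R) : Qr a -> Qr b -> Qr (a - b).
Proof. by move=> [p ->] [q ->]; exists (p - q); rewrite rmorphB. Qed.

Lemma Qr_add (R : realType) (a b : R) : Qr a -> Qr b -> Qr (a + b).
Proof. by move=> [p ->] [q ->]; exists (p + q); rewrite rmorphD. Qed.

Definition cls (R : realType) (x : R) : set R :=
  [set y | `[0%R, 1%R]%classic y /\ Qr (x - y)].

Definition rep (R : realType) (x : R) : R := xget 0 (cls x).

Definition Vit (R : realType) : set R := range (@rep R).

Lemma cls_ne (R : realType) (x : R) : exists y, cls x y.
Proof.
exists (x - (Num.floor x)%:~R); split.
  rewrite /= in_itv /= subr_ge0 floor_le /=.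
  have := floorD1_gt x; rewrite intrD => H.
  by rewrite lerBlDl ltW // addrC.
by exists ((Num.floor x)%:~R); rewrite subKr ratr_int.
Qed.

Lemma rep_cls (R : realType) (x : R) : cls x (rep x).
Proof. exact: xgetPex (cls_ne x). Qed.

Lemma rep_eq (R : realType) (x x' : R) : Qr (x - x') -> rep x = rep x'.
Proof.
move=> Qx; rewrite /rep; congr (xget 0 _); apply/funext => y; apply/propext.
split=> -[y01 Qy]; split => //.
  have -> : x' - y = (x - y) - (x - x') by ring.
  exact: Qr_sub.
have -> : x - y = (x - x') + (x' - y) by ring.
exact: Qr_add.
Qed.

Lemma Vit01 (R : realType) : @Vit R `<=` `[0%R, 1%R]%classic.
Proof. by move=> _ [x _ <-]; have [] := rep_cls x. Qed.

Lemma Vit_cover (R : realType) (x : R) : exists q : rat, Vit (x - ratr q).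
Proof.
have [_ [q Eq]] := rep_cls x; exists q; rewrite -Eq opprB addrC subrK.
by exists x.
Qed.

Lemma Vit_uniq (R : realType) (v1 v2 : R) : Vit v1 -> Vit v2 -> Qr (v1 - v2) ->
  v1 = v2.
Proof.
move=> [a _ <-] [b _ <-] Q; apply: rep_eq.
have [_ Qa] := rep_cls a; have [_ Qb] := rep_cls b.
have -> : a - b = (a - rep a) + (rep a - rep b) - (b - rep b).
  by ring.
by apply: Qr_sub => //; apply: Qr_add.
Qed.

Lemma om0 (R : realType) : om (set0 : set R) = 0%E.
Proof. rewrite /om. exact: outer_measure0. Qed.

Lemma om_ge0 (R : realType) (A : set R) : (0 <= om A)%E.
Proof. exact: (outer_measure_ge0 ((@wlength R idfun)^*)%mu). Qed.

Lemma om_le (R : realType) (A B : set R) : A `<=` B -> (om A <= om B)%E.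
Proof. exact: (le_outer_measure ((@wlength R idfun)^*)%mu). Qed.

Lemma om_itv (R : realType) (a b : R) : a <= b -> om `]a, b]%classic = (b - a)%:E.
Proof.
move=> ab; rewrite /om measurable_mu_extE; last exact: is_ocitv.
exact: (@wlength_itv_bnd R idfun a b false false ab).
Qed.

Lemma cst_series0 (R : realType) (c : \bar R) (P : pred nat) :
  (forall n, P n) -> (0 <= c)%E -> (\sum_(0 <= i <oo | P i) c <= 3%:E)%E -> c = 0%E.
Proof.
move=> PT c0 H.
have HN N : (c *+ N <= 3%:E)%E.
  have H1 := @nneseries_lim_ge R (fun=> c) P 0%N N (fun n _ _ => c0).
  apply: le_trans H; apply: le_trans H1.
  by rewrite big_mkcond /= (eq_bigr (fun=> c)) ?sumr_const_nat ?subn0 // => i _; rewrite PT.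
case: c c0 HN {H} => [r| |] //= r0 HN; last first.
  by have := HN 1%N; rewrite leye_eq.
move: r0; rewrite lee_fin le_eqVlt => /orP[/eqP<- //|r0].
have := HN (Num.truncn (3 / r)).+1; rewrite -EFin_natmul lee_fin => H.
have := truncnS_gt (3 / r); rewrite ltr_pdivrMr // => H2.
have : 3 < r *+ (Num.truncn (3 / r)).+1.
  by rewrite -[X in _ < X]mulr_natl.
by rewrite ltNge H.
Qed.

Lemma aux_bound (R : realType) (y a : R) :
  0 <= y - a -> y - a <= 1 -> 0 <= a -> a <= 1 -> (-1 < y) && (y <= 2).
Proof. move=> *; apply/andP; split; lra. Qed.

Lemma vit_null (R : realType) (M : set R) : M `<=` @Vit R ->
  measurable (M : set (LebesgueR R)) -> om M = 0%E.
Proof.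
move=> MV mM.
pose t n : R := ratr ((n.+1%:R)^-1 : rat).
have tE n : t n = (n.+1%:R)^-1.
  by rewrite /t fmorphV; congr (_^-1); exact: ratr_nat.
have t01 n : 0 <= t n <= 1.
  by rewrite tE invr_ge0 ler0n /= invf_le1 // ?ler1n // ltr0n.
have tinj : injective t.
  move=> n m; rewrite !tE => /invr_inj /eqP; rewrite eqr_nat eqSS => /eqP //.
pose Mn n : set (LebesgueR R) := sh (t n) M.
have mMn n : measurable (Mn n) := cara_sh (t n) mM.
have tMn : trivIset setT Mn.
  move=> n m _ _ [x [Mx Mx']]; apply: tinj.
  have E : x - t n = x - t m.
    apply: Vit_uniq; [exact: MV|exact: MV|].
    have -> : x - t n - (x - t m) = t m - t n by ring.
    by apply: Qr_sub; [exists (m.+1%:R^-1)|exists (n.+1%:R^-1)].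
  by apply/oppr_inj; apply: (@addrI _ x).
have sub : \bigcup_(n in setT) Mn n `<=` `](-1)%R, 2%R]%classic.
  move=> x [n _ /= Mnx]; have := Vit01 (MV _ Mnx).
  rewrite /= !in_itv /= => /andP[h1 h2]; have /andP[t0 t1] := t01 n.
  exact: (aux_bound h1 h2 t0 t1).
have := @measure_bigcup _ _ _ (@completed_lebesgue_measure R) setT Mn (fun i _ => mMn i) tMn.
rewrite /completed_lebesgue_measure /completed_lebesgue_stieltjes_measure /completed_measure_extension.
move=> E.
apply: (@cst_series0 R (om M) (fun i => i \in setT)); [by move=> n; rewrite in_setT|exact: om_ge0|].
have -> : (\sum_(0 <= i <oo | i \in setT) om M = \sum_(0 <= i <oo | i \in setT) om (Mn i))%E.
  by apply: eq_eseriesr => i _; rewrite /Mn om_sh.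
rewrite -[X in (X <= _)%E]E.
apply: (@le_trans _ _ (om `](-1)%R, 2%R]%classic)); first exact: om_le.
by rewrite om_itv ?lee_fin; lra.
Qed.

Lemma om0_negl (R : realType) (B : set R) :
  measurable (B : set (LebesgueR R)) -> om B = 0%E ->
  (@lebesgue_measure R).-negligible B.
Proof.
move=> mB B0.
have : completed_algebra_gen (@lebesgue_measure R) B.
  rewrite -g_sigma_completed_algebra_genE completed_caratheodory_measurable.
  exact: mB.
move=> [A mA [N nN ANB]].
rewrite -ANB; apply: negligibleU => //.
exists A; split => //.
apply/eqP; rewrite eq_le measure_ge0 andbT.
have H : (om A <= om B)%E by apply: om_le; rewrite -ANB; exact: subsetUl.
move: H; rewrite B0; exact.
Qed.

Lemma vitali_nonmeas (R : realType) (B : set R) : non_null01 B ->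
  exists X : set R, X `<=` B /\ ~ measurable (X : set (LebesgueR R)).
Proof.
move=> [B01 nB]; apply: contrapT => nex.
have allm (X : set R) : X `<=` B -> measurable (X : set (LebesgueR R)).
  by move=> XB; apply: contrapT => nm; apply: nex; exists X.
pose P n : set R := if @unpickle rat n is Some q then B `&` sh (ratr q) (@Vit R) else set0.
have P0 n : om (P n) = 0%E.
  rewrite /P; case: (unpickle n) => [q|]; last exact: om0.
  rewrite -(om_sh (- ratr q)); apply: vit_null.
    by move=> y [_]; rewrite /sh /= opprK addrK.
  by apply: cara_sh; apply: allm; exact: subIsetl.
have Bcov : B `<=` \bigcup_n P n.
  move=> x Bx; have [q Vq] := Vit_cover x; exists (pickle q); first by [].
  rewrite /P pickleK; by split.
have B0 : om B = 0%E.
  apply/eqP; rewrite eq_le om_ge0 andbT.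
  apply: (@le_trans _ _ (om (\bigcup_n P n))); first exact: om_le.
  apply: le_trans (outer_measure_sigma_subadditive ((@wlength R idfun)^*)%mu P) _.
  by rewrite eseries0 // => i _ _; exact: P0.
by apply: nB; apply: om0_negl B0; apply: allm.
Qed.

Lemma negl_meas (R : realType) (N : set R) :
  (@lebesgue_measure R).-negligible N -> measurable (N : set (LebesgueR R)).
Proof.
move=> [A [mA A0 NA]].
apply: negligible_sub_caratheodory.
exists A; split => //.
  exact: sub_caratheodory.
Qed.

Lemma wo_props (T : eqType) (W : rel T) : wochoice.well_order W ->
  [/\ reflexive W, antisymmetric W, total W & transitive W].
Proof.
move=> Wwo.
have Wc : wochoice.wo_chain W predT by apply: wochoice.withinW.
have Wref : reflexive W by move=> x; exact: (wochoice.wo_chain_reflexive Wc).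
have Want : antisymmetric W by move=> x y; exact: (wochoice.wo_chain_antisymmetric Wc).
have Wtot : total W by move=> x y; exact: (wochoice.wo_chainW Wc).
split => // y x z Wxy Wyz.
have [|m [[/= Am lbm] _]] := Wwo [pred t | (t == x) || (t == y) || (t == z)].
  by exists x; rewrite inE eqxx.
have Wmx : W m x by apply: lbm; rewrite inE eqxx.
have Wmy : W m y by apply: lbm; rewrite inE eqxx orbT.
have Wmz : W m z by apply: lbm; rewrite inE eqxx !orbT.
move: Am; rewrite inE => /orP[/orP[]|] /eqP Em; subst m => //.
- by have -> : x = y by apply: Want; rewrite Wxy Wmx.
- by have <- : y = z by apply: Want; rewrite Wyz Wmy.
Qed.

Definition sW (T : eqType) (W : rel T) (x y : T) : Prop := W x y && (x != y).

Lemma sW_wo (T : eqType) (W : rel T) : wochoice.well_order W -> strict_wellorder (sW W).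
Proof.
move=> Wwo; have [Wref Want Wtot Wtr] := wo_props Wwo.
split; [|split; [|split]].
- by move=> x; rewrite /sW eqxx andbF.
- move=> x y z /andP[Wxy nxy] /andP[Wyz nyz]; apply/andP; split.
    exact: Wtr Wxy Wyz.
  apply/eqP => Exz; subst z; by move/eqP: nxy; apply; apply: Want; rewrite Wxy Wyz.
- move=> x y; have [->|nxy] := eqVneq x y; first by left.
  right; have /orP[Wxy|Wyx] := Wtot x y.
    by left; rewrite /sW Wxy nxy.
  by right; rewrite /sW Wyx eq_sym nxy.
- move=> x; apply: contrapT => nAx.
  have [|m [[/= Am lbm] _]] := Wwo [pred t | ~~ `[< Acc (sW W) t >]].
    by exists x; rewrite inE; apply/negP => /asboolP.
  move: Am; rewrite inE => /negP; apply; apply/asboolP; constructor => y /andP[Wym nym].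
  apply: contrapT => nAy.
  have Wmy : W m y by apply: lbm; rewrite inE; apply/negP => /asboolP.
  by move/eqP: nym; apply; apply: Want; rewrite Wym Wmy.
Qed.
Local Open Scope card_scope.

Definition segm (T : Type) (r : T -> T -> Prop) (t : T) : set T := [set u | r u t].

Definition goodp (R : realType) (r : R -> R -> Prop) (t : R) : Prop :=
  forall B : set R, non_null01 B -> ~ (B #<= segm r t).

Lemma good_down (R : realType) (r : R -> R -> Prop) : strict_wellorder r ->
  forall t u, goodp r t -> r u t -> goodp r u.
Proof.
move=> [_ [rtr _]] t u gt rut B nB Bu; apply: (gt B nB).
apply: (card_le_trans Bu); apply: subset_card_le => v /= rvu; exact: rtr rvu rut.
Qed.

Lemma rec_inj (R : realType) (r : R -> R -> Prop) : strict_wellorder r ->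
  forall B : set R, non_null01 B -> (goodp r #<= B).
Proof.
move=> [rirr [rtr [rtot rwf]]] B nB.
pose F := fun (t : R) (rec : forall y, r y t -> R) =>
  xget 0 [set b | B b /\ ~ (exists y (p : r y t), rec y p = b)].
pose h := Fix rwf (fun _ => R) F.
have hE t : h t = xget 0 [set b | B b /\ ~ (h @` segm r t) b].
  rewrite /h Fix_eq; last first.
    move=> x f g fg; rewrite /F; congr (xget 0 _); apply/funext => b.
    apply/propext; split=> -[Bb nb]; split => //; move=> [y [p E]]; apply: nb;
      by exists y, p; rewrite ?fg // -fg.
  rewrite /F; congr (xget 0 _); apply/funext => b; apply/propext.
  split=> -[Bb nb]; split => //.
    by move=> [y ry E]; apply: nb; exists y, ry.
  by move=> [y [p E]]; apply: nb; exists y.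
have hP t : goodp r t -> B (h t) /\ ~ (h @` segm r t) (h t).
  move=> gt; rewrite hE.
  apply: (@xgetPex _ 0 [set b | B b /\ ~ (h @` segm r t) b]).
  apply: contrapT => nex.
  apply: (gt B nB); apply: (@card_le_trans _ _ _ (h @` segm r t)); last first.
    exact: card_image_le.
  apply: subset_card_le => b Bb; apply: contrapT => nb; apply: nex; by exists b.
apply/pcard_leP; apply/injfunPex; exists h.
  by move=> t /hP[].
move=> x y; rewrite !inE => gx gy hxy; apply: contrapT => nxy.
have [//|[rxy|ryx]] := rtot x y.
  by have [_] := hP y gy; apply; exists x.
by have [_] := hP x gx; apply; exists y.
Qed.

Lemma nn01 (R : realType) : non_null01 (`[0%R, 1%R] : set R).
Proof.
split => // -[A [mA A0 sA]].
have := @le_measure _ _ _ (@lebesgue_measure R) `[0%R, 1%R]%classic A.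
rewrite !inE => /(_ (measurable_itv _) mA sA) H0.
have H : (@lebesgue_measure R `[0%R, 1%R]%classic <= lebesgue_measure A)%E := H0.
move: H; rewrite A0 lebesgue_measure_itv /= lte_fin ltr01 /= => H.
by move: H; rewrite oppr0 adde0 leNgt lte01.
Qed.

Lemma B0_exists (R : realType) (r : R -> R -> Prop) : strict_wellorder r ->
  exists B0 : set R, non_null01 B0 /\ (B0 #<= goodp r).
Proof.
move=> rwo; have [rirr [rtr [rtot rwf]]] := rwo.
have [allg|] := pselect (forall t, goodp r t).
  exists `[0%R, 1%R]%classic; split; first exact: nn01.
  have -> : goodp r = setT by apply/funext => t; apply/propext; split.
  exact: card_leT.
move=> /existsNP[t0 nt0].
move: t0 nt0; apply: (@well_founded_ind R r rwf (fun t => ~ goodp r t -> exists B0 : set R, non_null01 B0 /\ (B0 #<= goodp r))) => t IH nt.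
have [B [nB Bt]] : exists B : set R, non_null01 B /\ (B #<= segm r t).
  apply: contrapT => nex; apply: nt => B nB Bt; apply: nex; by exists B.
have [sub|] := pselect (segm r t `<=` goodp r).
  exists B; split => //; apply: (card_le_trans Bt); exact: subset_card_le.
move=> /existsNP[u /not_implyP[rut nu]].
exact: IH rut nu.
Qed.





Lemma inj_le_img (T U : Type) (A : set T) (f : T -> U) :
  {in A &, injective f} -> A #<= f @` A.
Proof. by move=> fi; have := inj_card_eq fi; rewrite card_eq_le => /andP[]. Qed.

Theorem mainTheorem19 (R : realType) :
  exists (I : Type) (r : I -> I -> Prop),
    order_type_nonN R r /\
    (forall g : R -> R, lebesgue_measurable_fun g -> LIM_L r g) /\
    (exists g : R -> R, LIM_L r g /\ ~ lebesgue_measurable_fun g).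
Proof.
have [W Wwo] := wochoice.well_ordering_principle R.
set r := sW W.
have rwo : strict_wellorder r by exact: sW_wo.
have [rirr [rtr [rtot rwf]]] := rwo.
set S := goodp r.
have [B0 [nB0 B0S]] := B0_exists rwo.
pose I := {t : R | S t}.
pose rI (i j : I) := r (sval i) (sval j).
have sinj : injective (@proj1_sig R S).
  by move=> [a pa] [b pb] /= eab; subst b; congr exist; exact: Prop_irrelevance.
have sinjA (A : set I) : {in A &, injective (@proj1_sig R S)}.
  by move=> x y _ _; apply: sinj.
have IS : [set: I] #= S.
  have -> : S = sval @` [set: I].
    apply/funext => t; apply/propext; split => [St|[i _ <-]]; last exact: svalP.
    by exists (exist _ t St).
  exact/card_esym/inj_card_eq.
have segI (i : I) : [set j | rI j i] #<= segm r (sval i).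
  apply: (card_le_trans (inj_le_img (sinjA _))).
  by apply: subset_card_le => _ [j /= rji <-].
have SleB (B : set R) : non_null01 B -> S #<= B by exact: rec_inj.
have IleB (B : set R) : non_null01 B -> [set: I] #<= B.
  move=> nB; apply: card_le_trans (SleB B nB).
  by move: IS; rewrite card_eq_le => /andP[].
have B0I : B0 #<= [set: I].
  apply: (card_le_trans B0S).
  by move: IS; rewrite card_eq_le => /andP[].
have [psi psiS psiI] : exists2 psi : R -> R, set_fun B0 S psi & set_inj B0 psi.
  by apply/injfunPex; apply/pcard_leP.
have [b0 Bb0] : exists b, B0 b.
  apply: contrapT => nb; apply: nB0.2; exists set0; split => //.
  by move=> x Bx; apply: nb; exists x.
pose i0 : I := exist _ (psi b0) (psiS b0 Bb0).
exists I, rI; split; [split; [|split; [|split]]|split].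
- split; [|split; [|split]].
  + by move=> i; apply: rirr.
  + by move=> i j k; apply: rtr.
  + move=> i j; have [/sinj ->|[]] := rtot (sval i) (sval j); [by left|by right; left|by right; right].
  + have H t : Acc r t -> forall i : I, sval i = t -> Acc rI i.
      elim=> {}t _ IH i it; constructor => j rji.
      by apply: (IH (sval j)) => //; rewrite /rI it in rji.
    by move=> i; exact: (H _ (rwf (sval i))).
- exists B0; split => //; rewrite card_eq_le; apply/andP; split => //.
  exact: IleB.
- exact: IleB.
- move=> i iseg; apply: (svalP i B0 nB0).
  exact: card_le_trans B0I (card_le_trans iseg (segI i)).
- move=> g mg; exists (fun=> g); split => // x e e0.
  by exists i0 => i _; rewrite subrr normr0.
have [X [XB nmX]] := vitali_nonmeas nB0.
pose fs (i : I) := [set x | X x /\ r (psi x) (sval i)].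
exists (\1_X); split; last by move/measurable_indicP.
exists (fun i => \1_(fs i)); split.
  move=> i; apply/measurable_indicP; apply: negl_meas.
  apply: contrapT => nneg.
  have nn : non_null01 (fs i).
    by split => // x [/XB/(nB0.1)].
  apply: (svalP i _ nn); apply: (card_le_trans (inj_le_img (f := psi) _)).
    by move=> x y; rewrite !inE => -[/XB Bx _] [/XB By _]; apply: psiI; rewrite inE.
  by apply: subset_card_le => _ [x [_ rx] <-].
move=> x e e0.
have [Xx|nXx] := pselect (X x).
  exists (exist _ (psi x) (psiS x (XB x Xx))) => i rxi.
  by rewrite !indicE !mem_set //= subrr normr0.
exists i0 => i _; rewrite !indicE !memNset ?subrr ?normr0 //.
by move=> [].
Qed.
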